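(* Let $n$ be a positive integer. (a) If $\lambda^{n/2}>\frac{2\sqrt2\, dC_1}{|\theta|}$, then $\langle k_n\theta\rangle=-\frac{dZ_n}{\theta}$. (b) If $\lambda^{n/2}>2dC_1$, then $\langle k_n\theta^2\rangle=-dY_n$.
   Context: Standing setup: $p,q\in\mathbb{Z}$ are such that $x^3-px-q$ is irreducible over $\mathbb{Q}$ with exactly one real root $\theta$ (one has $3\theta^2-4p>0$ and $3\theta^2-p>0$). $K=\mathbb{Q}(\theta)\subset\mathbb{R}$, $\mathcal{O}_K$ its ring of integers. $d$ is a positive integer with $\mathcal{O}_K\subseteq\frac1d\mathbb{Z}[\theta]$. $\lambda\in\mathcal{O}_K$ is a unit with $\lambda>1$. For $n\ge1$ the rationals $a_n,b_n,c_n$ are defined by $a_n+b_n\theta+c_n\theta^2=\lambda^n$, and $X_n=a_n+pc_n-b_n\theta$, $Y_n=a_n+pc_n-c_n\theta^2$, $Z_n=b_n\theta-c_n\theta^2$, $k_n=dc_n$. Constants: $C_1=\max\{\sqrt2,\ \frac{\sqrt2|\theta|}{\sqrt{3\theta^2-4p}}\}$, $C_2=\frac{\sqrt d}{\sqrt{3\theta^2-p}}$. For $x\in\mathbb{R}$, $\langle x\rangle=x-\lfloor x+\tfrac12\rfloor$ and $\|x\|=|\langle x\rangle|$. *)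

(* Defs.v *)
From HB Require Import structures.
From mathcomp Require Import all_boot all_order all_algebra.
From Stdlib Require Import ZArith.

Set Implicit Arguments.
Unset Strict Implicit.
Unset Printing Implicit Defensive.

Definition Z_to_int (z : Z) : int :=
  match z with
  | Z0 => Posz 0
  | Zpos n => Posz (Pos.to_nat n)
  | Zneg n => Negz (Pos.to_nat n).-1
  end.

(* Negz k denotes -(k+1). *)

Definition cubic_irreducible (p q : Z) : Prop :=
  irreducible_poly
    (('X^3 - (Z_to_int p)%:~R *: 'X - ((Z_to_int q)%:~R)%:P)%R : {poly rat}).

From Stdlib Require Import Reals QArith Qreals.
Local Open Scope R_scope.

Definition is_alg_integer (alpha : R) : Prop :=
  exists (m : nat) (c : nat -> Z),
    alpha ^ (S m) + sum_f_R0 (fun i => IZR (c i) * alpha ^ i) m = 0.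

(* alpha lies in K = Q(theta) (theta of degree 3, so Q(theta) = Q + Q theta + Q theta^2). *)
Definition in_K (theta alpha : R) : Prop :=
  exists a b c : Q, alpha = Q2R a + Q2R b * theta + Q2R c * theta ^ 2.

Definition in_OK (theta alpha : R) : Prop :=
  in_K theta alpha /\ is_alg_integer alpha.

Definition in_Ztheta_over_d (d : Z) (theta alpha : R) : Prop :=
  exists u v w : Z, IZR d * alpha = IZR u + IZR v * theta + IZR w * theta ^ 2.

(* floor via Stdlib's Int_part (Int_part x = up x - 1 = floor x). *)
Definition Rfloor (x : R) : R := IZR (Int_part x).

(* <x> = x - floor(x + 1/2) *)
Definition centered (x : R) : R := x - Rfloor (x + / 2).

Definition C1const (p : Z) (theta : R) : R :=
  Rmax (sqrt 2) (sqrt 2 * Rabs theta / sqrt (3 * theta ^ 2 - 4 * IZR p)).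

(* Main.v *)
Require Import Defs.
From Stdlib Require Import Reals QArith Qreals Lra Psatz ZArith Lia.
Ltac sring := ring.
Ltac sfield := field.
Ltac slra := lra.
Ltac snra := nra.
Ltac slia := lia.
Ltac snia := nia.
Definition detZZ (p q a b c : Z) : Z :=
  (a*((a+c*p)*(a+c*p) - (b*p+c*q)*b) - c*q*(b*(a+c*p) - (b*p+c*q)*c) + b*q*(b*b - (a+c*p)*c))%Z.
Definition cubZ (p q n d : Z) : Z := (n*n*n - p*n*(d*d) - q*(d*d*d))%Z.
From HB Require Import structures.
From mathcomp Require Import all_boot all_order all_algebra.
From mathcomp Require Import Rstruct.
From mathcomp Require Import ring lra ssrZ zify.
Set Implicit Arguments. Unset Strict Implicit. Unset Printing Implicit Defensive.
Import Order.TTheory GRing.Theory Num.Theory.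
Section PowAlg.
Local Open Scope ring_scope.
Variable (x : R) (m : nat) (ci : nat -> int).
Hypothesis hx : x ^+ m.+1 + \sum_(i < m.+1) (ci i)%:~R * x ^+ i = 0.

Fixpoint ecoef (k : nat) (j : nat) : int :=
  match k with
  | O => (j == 0)%N%:R
  | k'.+1 => (if j is j'.+1 then ecoef k' j' else 0) - ecoef k' m * ci j
  end.

Lemma ecoefP k : x ^+ k = \sum_(j < m.+1) (ecoef k j)%:~R * x ^+ j.
Proof.
elim: k => [|k IH].
  rewrite big_ord_recl /= expr0 mulr1 big1 ?addr0 // => j _.
  by rewrite /= mul0r.
have hxm : x ^+ m.+1 = - \sum_(i < m.+1) (ci i)%:~R * x ^+ i.
  by apply/eqP; rewrite -subr_eq0 opprK hx.
rewrite exprS IH mulr_sumr big_ord_recr /= mulrC -mulrA -exprSr hxm.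
rewrite [RHS]big_ord_recl /=.
under [in RHS]eq_bigr => j _ do rewrite /= intrD intrN mulrDl mulNr intrM.
rewrite big_split /=.
rewrite intrD intrN intrM sub0r mulNr.
under eq_bigr => j _ do rewrite mulrCA -exprS.
rewrite mulrN mulr_sumr -sumrN.
rewrite [RHS]addrCA; congr (_ + _).
rewrite big_ord_recl /= mulrA; congr (_ + _).
by apply: eq_bigr => j _; rewrite mulrA.
Qed.
Lemma pow_root K : exists P : {poly int},
  P \is monic /\ size P = m.+2 /\ (map_poly intr P).[x ^+ K] = 0.
Proof.
pose M : 'M[int]_m.+1 := \matrix_(i, j) ecoef (K + i) j.
pose v : 'cV[R]_m.+1 := \col_i x ^+ i.
have Mv : map_mx intr M *m v = x ^+ K *: v.
  apply/matrixP => i j; rewrite !mxE.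
  under eq_bigr => k _ do rewrite !mxE.
  by rewrite -ecoefP exprD.
have H : forall p : {poly R}, horner_mx (map_mx intr M) p *m v = p.[x ^+ K] *: v.
  elim/poly_ind => [|p c IH]; first by rewrite rmorph0 mul0mx horner0 scale0r.
  rewrite rmorphD rmorphM /= horner_mx_X horner_mx_C -mulmxE mulmxDl -mulmxA Mv.
  by rewrite -scalemxAr IH scalerA hornerMXaddC scalerDl mul_scalar_mx mulrC.
exists (char_poly M); split; first exact: char_poly_monic.
split; first exact: size_char_poly.
have := H (char_poly (map_mx intr M)).
rewrite Cayley_Hamilton mul0mx -map_char_poly => /matrixP /(_ ord0 ord0).
by rewrite !mxE expr0 mulr1 => <-.
Qed.
End PowAlg.
Local Open Scope ring_scope.

Lemma IZR_intr (z : Z) : IZR z = ((int_of_Z z)%:~R : R).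
Proof.
case: z => [|p|p] //=.
  by rewrite IZRposE INRE Pos_to_natE.
have -> : IZR (Z.neg p) = - IZR (Z.pos p) by [].
rewrite IZRposE INRE Pos_to_natE NegzE prednK ?mulrNz //.
by rewrite -Pos_to_natE; have := Pos2Nat.is_pos p => /ssrnat.ltP.
Qed.

Lemma intr_IZR (t : int) : (t%:~R : R) = IZR (Z_of_int t).
Proof. by rewrite IZR_intr Z_of_intK. Qed.

Lemma sum_f_R0E (f : nat -> R) n : sum_f_R0 f n = \sum_(i < n.+1) f i.
Proof.
elim: n => [|n IH]; first by rewrite big_ord_recl big_ord0 /= addr0.
by rewrite /= IH [in RHS]big_ord_recr.
Qed.

Lemma alg_int_pow (x : R) (K : nat) : is_alg_integer x -> is_alg_integer (pow x K).
Proof.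
move=> [m [c hc]].
have hx : x ^+ m.+1 + \sum_(i < m.+1) ((int_of_Z (c i))%:~R : R) * x ^+ i = 0.
  apply: etrans _ hc; rewrite sum_f_R0E RpowE; congr (_ + _); apply: eq_bigr => i _.
  by rewrite IZR_intr RpowE.
have [P [mP [sP hP]]] := @pow_root x m (fun i => int_of_Z (c i)) hx K.
exists m, (fun i => Z_of_int P`_i).
rewrite sum_f_R0E; apply: (etrans _ hP).
rewrite horner_coef size_map_poly_id0; last first.
  by rewrite (monicP mP) rmorph1 oner_neq0.
rewrite sP [RHS]big_ord_recr [RHS]addrC !RpowE; congr (_ + _).
  rewrite coef_map /= -exprM.
  have : lead_coef P = 1 by apply/eqP.
  by rewrite lead_coefE sP /= => ->; rewrite mul1r.
apply: eq_bigr => i _; rewrite coef_map /= -intr_IZR RpowE -exprM //.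
Qed.

Local Open Scope ring_scope.

Lemma size_cubic (c e : rat) : size ('X^3 - c *: 'X - e%:P : {poly rat}) = 4%N.
Proof.
rewrite -addrA size_polyDl ?size_polyXn //.
rewrite (leq_ltn_trans (size_polyD _ _)) // gtn_max.
rewrite size_polyN size_polyN (leq_ltn_trans (size_scale_leq _ _)) ?size_polyX //.
by rewrite (leq_ltn_trans (size_polyC_leq1 _)).
Qed.

Lemma no_rat_root_int (p q : Z) (N D : int) : D != 0 ->
  Defs.cubic_irreducible p q ->
  N ^+ 3 - (int_of_Z p) * N * D ^+ 2 - (int_of_Z q) * D ^+ 3 != 0.
Proof.
move=> D0 [_ Hirr]; apply/negP => /eqP E.
pose r : rat := N%:~R / D%:~R.
have D0' : (D%:~R : rat) != 0 by rewrite intr_eq0.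
have hr : root ('X^3 - (Z_to_int p)%:~R *: 'X - ((Z_to_int q)%:~R)%:P) r.
  rewrite /root !hornerE /=.
  have : (D%:~R : rat) ^+ 3 * (r ^+ 3 - (int_of_Z p)%:~R * r - (int_of_Z q)%:~R) = 0.
    rewrite /r.
    have -> : (D%:~R : rat) ^+ 3 * ((N%:~R / D%:~R) ^+ 3 - (int_of_Z p)%:~R * (N%:~R / D%:~R) - (int_of_Z q)%:~R)
       = (N ^+ 3 - (int_of_Z p) * N * D ^+ 2 - (int_of_Z q) * D ^+ 3)%:~R.
      rewrite !(intrD, intrN, intrM, rmorphXn) /=. field. exact: D0'.
    by rewrite E.
  move/eqP; rewrite mulf_eq0 expf_eq0 /= (negbTE D0') /= => /eqP h.
  apply/eqP; rewrite -[RHS]h /r.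
  change (Z_to_int p) with (int_of_Z p); change (Z_to_int q) with (int_of_Z q).
  by rewrite mulrA.
have := Hirr ('X - r%:P).
rewrite size_XsubC /= => /(_ isT).
rewrite dvdp_XsubCl hr => /(_ isT) /eqp_size.
by rewrite size_XsubC size_cubic.
Qed.
Local Close Scope ring_scope.
Local Open Scope R_scope.

Lemma no_rat_root (p q : Z) (t : Q) : Defs.cubic_irreducible p q ->
  (Q2R t)^3 - IZR p * Q2R t - IZR q <> 0.
Proof.
move=> Hirr; case: t => n d E.
have Dn : IZR (Z.pos d) <> 0 by apply: not_0_IZR.
have Ez : cubZ p q n (Z.pos d) = Z0.
  apply: eq_IZR.
  have -> : IZR (cubZ p q n (Z.pos d))
     = (IZR (Z.pos d))^3 * ((Q2R (n # d))^3 - IZR p * Q2R (n # d) - IZR q).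
    rewrite /cubZ !minus_IZR !mult_IZR /Q2R /=; sfield; exact: Dn.
  by rewrite E Rmult_0_r.
have Dz : (int_of_Z (Z.pos d) != 0)%R.
  by apply/eqP => h; have := congr1 Z_of_int h; rewrite int_of_ZK.
have := @no_rat_root_int p q (int_of_Z n) (int_of_Z (Z.pos d)) Dz Hirr.
have -> : ((int_of_Z n ^+ 3 - int_of_Z p * int_of_Z n * int_of_Z (Z.pos d) ^+ 2 -
    int_of_Z q * int_of_Z (Z.pos d) ^+ 3) = int_of_Z (cubZ p q n (Z.pos d)))%R.
  rewrite /cubZ; lia.
by rewrite Ez.
Qed.

Definition isQ (r : R) : Prop := exists t : Q, r = Q2R t.
Lemma isQ_Q t : isQ (Q2R t). Proof. by exists t. Qed.
Lemma isQ_IZR z : isQ (IZR z).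
Proof. exists (inject_Z z); rewrite /Q2R /=; sfield. Qed.
Lemma isQ_add r s : isQ r -> isQ s -> isQ (r + s).
Proof. by move=> [a ->] [b ->]; exists (Qplus a b); rewrite Q2R_plus. Qed.
Lemma isQ_mul r s : isQ r -> isQ s -> isQ (r * s).
Proof. by move=> [a ->] [b ->]; exists (Qmult a b); rewrite Q2R_mult. Qed.
Lemma isQ_opp r : isQ r -> isQ (- r).
Proof. by move=> [a ->]; exists (Qopp a); rewrite Q2R_opp. Qed.
Lemma isQ_sub r s : isQ r -> isQ s -> isQ (r - s).
Proof. by move=> hr hs; apply: isQ_add => //; apply: isQ_opp. Qed.
Lemma isQ_inv r : isQ r -> r <> 0 -> isQ (/ r).
Proof.
move=> [a ->] h; exists (Qinv a); rewrite Q2R_inv //.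
by move=> ha; apply: h; rewrite (Qeq_eqR _ _ ha) /Q2R /=; sfield.
Qed.
Lemma isQ_div r s : isQ r -> isQ s -> s <> 0 -> isQ (r / s).
Proof. by move=> hr hs h; apply: isQ_mul => //; apply: isQ_inv. Qed.

Lemma no_rat_root' (p q : Z) r : Defs.cubic_irreducible p q -> isQ r ->
  r^3 - IZR p * r - IZR q <> 0.
Proof. by move=> H [t ->]; apply: no_rat_root. Qed.

Lemma lin_indep (p q : Z) (th x y z : R) : Defs.cubic_irreducible p q ->
  th^3 - IZR p * th - IZR q = 0 -> isQ x -> isQ y -> isQ z ->
  x + y * th + z * th^2 = 0 -> x = 0 /\ y = 0 /\ z = 0.
Proof.
move=> Hirr Hr qx qy qz E.
have NR := no_rat_root' Hirr.
have zz : z = 0.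
  case: (Req_EM_T z 0) => // z0; exfalso.
  pose be := - y / z; pose ga := - x / z.
  have qbe : isQ be by apply: isQ_div => //; apply: isQ_opp.
  have qga : isQ ga by apply: isQ_div => //; apply: isQ_opp.
  have t2 : th^2 = be * th + ga.
    apply: (Rmult_eq_reg_l z) => //.
    have : z * (be * th + ga) = - y * th - x by rewrite /be /ga; sfield.
    slra.
  have t3 : th^3 = (be^2 + ga) * th + be * ga.
    have -> : th^3 = th * th^2 by sring.
    rewrite t2; have -> : th * (be * th + ga) = be * th^2 + ga * th by sring.
    rewrite t2; sring.
  case: (Req_EM_T (be^2 + ga - IZR p) 0) => e0.
    apply: (NR (- be)); first by apply: isQ_opp.
    have hp : IZR p = be^2 + ga by slra.
    have hq : IZR q = be * ga.
      have : (be^2 + ga - IZR p) * th + be * ga - IZR q = 0 by rewrite -Hr t3; sring.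
      by rewrite e0; slra.
    rewrite hp hq; sring.
  have qbe2 : isQ (be^2) by rewrite /pow; apply: isQ_mul => //; apply: isQ_mul => //; exists (inject_Z 1); rewrite /Q2R /=; sfield.
  have qn : isQ (IZR q - be * ga) by apply: isQ_sub; [apply: isQ_IZR | apply: isQ_mul].
  have qd : isQ (be^2 + ga - IZR p) by apply: isQ_sub; [apply: isQ_add | apply: isQ_IZR].
  apply: (NR ((IZR q - be * ga) / (be^2 + ga - IZR p))); first by apply: isQ_div.
  have eth : th = (IZR q - be * ga) / (be^2 + ga - IZR p).
    apply: (Rmult_eq_reg_r (be^2 + ga - IZR p)) => //.
    have : (be^2 + ga - IZR p) * th + be * ga - IZR q = 0 by rewrite -Hr t3; sring.
    move=> h.
    have -> : (IZR q - be * ga) / (be ^ 2 + ga - IZR p) * (be ^ 2 + ga - IZR p) = IZR q - be * ga by sfield.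
    slra.
  by rewrite -eth.
have yy : y = 0.
  case: (Req_EM_T y 0) => // y0; exfalso.
  apply: (NR (- x / y)); first by apply: isQ_div => //; apply: isQ_opp.
  have -> : - x / y = th.
    apply: (Rmult_eq_reg_r y) => //.
    have -> : - x / y * y = - x by sfield.
    rewrite zz in E; slra.
  exact: Hr.
by rewrite zz yy in E; split => //; slra.
Qed.

Definition trip := (R * R * R)%type.
Definition ev (th : R) (u : trip) : R := let '(a, b, c) := u in a + b * th + c * th^2.
Definition tmul (p q : R) (u v : trip) : trip :=
  let '(a, b, c) := u in let '(a', b', c') := v in
  (a * a' + q * (b * c' + c * b'), a * b' + b * a' + p * (b * c' + c * b') + q * c * c', a * c' + b * b' + c * a' + p * c * c').
Fixpoint tpow (p q : R) (u : trip) (n : nat) : trip :=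
  match n with O => (1, 0, 0) | S n => tmul p q u (tpow p q u n) end.
Definition tA (th s : R) (u : trip) : R := let '(a, b, c) := u in a - b * th/2 + c * (th^2 - s^2)/4.
Definition tB (th s : R) (u : trip) : R := let '(a, b, c) := u in s * (b - c * th)/2.
Definition tQ th s u := tA th s u ^ 2 + tB th s u ^ 2.
Definition tdet (p q : R) (u : trip) : R := let '(a, b, c) := u in
  a * ((a+c * p) * (a+c * p) - (b * p+c * q) * b) - c * q * (b * (a+c * p) - (b * p+c * q) * c) + b * q * (b * b - (a+c * p) * c).
Definition tsc (k : R) (u : trip) : trip := let '(a, b, c) := u in (k * a, k * b, k * c).

Lemma ev_mul p q th u v : q = th^3 - p * th -> ev th (tmul p q u v) = ev th u * ev th v.
Proof. by case: u => [[a b] c]; case: v => [[a' b'] c'] /= ->; sring. Qed.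

Lemma tA_mul p q th s u v : p = (3 * th^2 - s^2)/4 -> q = th^3 - p * th ->
  tA th s (tmul p q u v) = tA th s u * tA th s v - tB th s u * tB th s v.
Proof. by case: u => [[a b] c]; case: v => [[a' b'] c'] /= hq hp; rewrite hp hq; sfield. Qed.

Lemma tB_mul p q th s u v : p = (3 * th^2 - s^2)/4 -> q = th^3 - p * th ->
  tB th s (tmul p q u v) = tA th s u * tB th s v + tB th s u * tA th s v.
Proof. by case: u => [[a b] c]; case: v => [[a' b'] c'] /= hq hp; rewrite hp hq; sfield. Qed.

Lemma tQ_mul p q th s u v : p = (3 * th^2 - s^2)/4 -> q = th^3 - p * th ->
  tQ th s (tmul p q u v) = tQ th s u * tQ th s v.
Proof.
move=> hp hq; rewrite /tQ (tA_mul _ _ hp hq) (tB_mul _ _ hp hq); sring.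
Qed.

Lemma tnorm p q th s u : p = (3 * th^2 - s^2)/4 -> q = th^3 - p * th ->
  ev th u * tQ th s u = tdet p q u.
Proof. by case: u => [[a b] c] hp hq; rewrite /tQ /= hq hp; sfield. Qed.

Lemma tQ_sc th s k u : tQ th s (tsc k u) = k^2 * tQ th s u.
Proof. by case: u => [[a b] c]; rewrite /tQ /=; sfield. Qed.

Lemma ev_sc th k u : ev th (tsc k u) = k * ev th u.
Proof. by case: u => [[a b] c] /=; sring. Qed.

Lemma ev_pow p q th u n : q = th^3 - p * th -> ev th (tpow p q u n) = ev th u ^ n.
Proof.
move=> hq; elim: n => [|n IH] /=; first by sring.
by rewrite -IH -(ev_mul _ _ hq).
Qed.

Lemma tQ_pow p q th s u n : p = (3 * th^2 - s^2)/4 -> q = th^3 - p * th ->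
  tQ th s (tpow p q u n) = tQ th s u ^ n.
Proof.
move=> hp hq; elim: n => [|n IH] /=; first by rewrite /tQ /=; sfield.
by rewrite (tQ_mul _ _ hp hq) IH.
Qed.

Lemma centered_int (z : Z) (e : R) : - / 2 < e < / 2 -> centered (IZR z + e) = e.
Proof.
move=> [h1 h2]; rewrite /centered /Rfloor.
have -> : Int_part (IZR z + e + / 2) = z.
  rewrite /Int_part.
  have <- : Z.add z 1 = up (IZR z + e + / 2).
    apply: tech_up; rewrite plus_IZR; slra.
  slia.
slra.
Qed.

Lemma theta_ne0 (p q : Z) th : Defs.cubic_irreducible p q ->
  th^3 - IZR p * th - IZR q = 0 -> th <> 0.
Proof.
move=> Hirr Hr h0; apply: (no_rat_root' Hirr (isQ_IZR 0)).
by move: Hr; rewrite h0.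
Qed.

Lemma disc_pos (p q : Z) th : Defs.cubic_irreducible p q ->
  th^3 - IZR p * th - IZR q = 0 ->
  (forall x : R, x ^ 3 - IZR p * x - IZR q = 0 -> x = th) ->
  0 < 3 * th^2 - 4 * IZR p.
Proof.
move=> Hirr Hr Hu.
have t0 := theta_ne0 Hirr Hr.
case: (Rlt_le_dec 0 (3 * th^2 - 4 * IZR p)) => // hD; exfalso.
pose r := sqrt (4 * IZR p - 3 * th^2).
have rr : r * r = 4 * IZR p - 3 * th^2 by apply: sqrt_sqrt; slra.
have key : forall x, x^2 + th * x + th^2 - IZR p = 0 -> x = th.
  move=> x hx; apply: Hu.
  have -> : x^3 - IZR p * x - IZR q = (x - th) * (x^2 + th * x + th^2 - IZR p) + (th^3 - IZR p * th - IZR q) by sring.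
  rewrite hx Hr; sring.
have e1 := key ((- th + r) / 2) ltac:(rewrite -[in X in _ = X](Rmult_0_r (/4)); have -> : 0 = (3 * th^2 + r * r - 4 * IZR p) / 4 by rewrite rr; sfield; sfield).
have e2 := key ((- th - r) / 2) ltac:(have -> : 0 = (3 * th^2 + r * r - 4 * IZR p) / 4 by rewrite rr; sfield; sfield).
apply: t0; slra.
Qed.

Lemma bernoulli (r : R) (m : nat) : 1 <= r -> 1 + INR m * (r - 1) <= r ^ m.
Proof.
move=> hr; elim: m => [|m IH]; first by rewrite /=; slra.
rewrite S_INR /=.
have h0 : 0 <= r - 1 by slra.
have : (r - 1) * (1 + INR m * (r - 1)) <= (r - 1) * r ^ m by apply: Rmult_le_compat_l.
have := pos_INR m => hm h1.
have : 0 <= INR m * ((r - 1) * (r - 1)) by apply: Rmult_le_pos => //; snra.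
snra.
Qed.

Lemma pow_bound (r r' D : R) : 0 < r -> 0 < D -> r * r' = 1 ->
  (forall m, exists k, D * r' ^ m = IZR k) -> r <= 1.
Proof.
move=> r0 D0 rr H.
case: (Rle_lt_dec r 1) => // r1; exfalso.
have r'0 : 0 < r' by apply: (Rmult_lt_reg_l r); slra.
have [m hm] := INR_unbounded (D / (r - 1)).
have [k hk] := H m.
have pk : 0 < IZR k by rewrite -hk; apply: Rmult_lt_0_compat => //; apply: pow_lt.
have k1 : 1 <= IZR k by apply: IZR_le; have := lt_IZR _ _ pk; slia.
have hrm : r ^ m * r' ^ m = 1 by rewrite -Rpow_mult_distr rr pow1.
have b := bernoulli m (Rlt_le _ _ r1).
have : D >= r ^ m.
  have : r ^ m * (D * r' ^ m) >= r ^ m * 1.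
    apply: Rle_ge; apply: Rmult_le_compat_l; first by apply: pow_le; slra.
    slra.
  have -> : r ^ m * (D * r' ^ m) = D * (r ^ m * r' ^ m) by sring.
  rewrite hrm; slra.
have : INR m * (r - 1) > D.
  have h : D / (r - 1) * (r - 1) = D by sfield; slra.
  rewrite -h; apply: Rmult_gt_compat_r; slra.
slra.
Qed.

Definition qtrip (u : trip) : Prop := let '(a, b, c) := u in isQ a /\ isQ b /\ isQ c.

Lemma qtrip_mul p q u v : isQ p -> isQ q -> qtrip u -> qtrip v -> qtrip (tmul p q u v).
Proof.
case: u => [[a b] c]; case: v => [[a' b'] c'] /= hp hq [qa [qb qc]] [qa' [qb' qc']].
repeat split; repeat (apply: isQ_add || apply: isQ_mul) => //.
Qed.

Lemma qtrip_pow p q u n : isQ p -> isQ q -> qtrip u -> qtrip (tpow p q u n).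
Proof.
move=> hp hq hu; elim: n => [|n IH] /=.
  by split; [exists (inject_Z 1)|split; exists (inject_Z 0)]; rewrite /Q2R /=; sfield.
exact: qtrip_mul.
Qed.

Lemma ev_uniq (p q : Z) th u v : Defs.cubic_irreducible p q ->
  th^3 - IZR p * th - IZR q = 0 -> qtrip u -> qtrip v -> ev th u = ev th v -> u = v.
Proof.
case: u => [[a b] c]; case: v => [[a' b'] c'] /= Hirr Hr [qa [qb qc]] [qa' [qb' qc']] E.
have [h1 [h2 h3]] : a - a' = 0 /\ b - b' = 0 /\ c - c' = 0.
  apply: (lin_indep Hirr Hr); try apply: isQ_sub => //.
  slra.
have -> : a = a' by slra.
have -> : b = b' by slra.
have -> : c = c' by slra.
by [].
Qed.

Lemma IZR_detZZ p q a b c : IZR (detZZ p q a b c) = tdet (IZR p) (IZR q) (IZR a, IZR b, IZR c).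
Proof. by rewrite /detZZ /= !(plus_IZR, minus_IZR, mult_IZR). Qed.

Lemma tQ_ge0 th s u : 0 <= tQ th s u.
Proof. rewrite /tQ; apply: Rplus_le_le_0_compat; apply: pow2_ge_0. Qed.

Lemma qtrip_inK th u : qtrip u -> in_K th (ev th u).
Proof.
case: u => [[a b] c] [[a1 ->] [[b1 ->] [c1 ->]]].
by exists a1, b1, c1.
Qed.

Delimit Scope Z_scope with Z.
Import Corelib.Init.Peano.
Require Import Defs.
Open Scope R_scope.
Theorem mainTheorem8
  (p q : Z) (theta : R)
  (Hirr : cubic_irreducible p q)
  (Hroot : theta ^ 3 - IZR p * theta - IZR q = 0)
  (Hunique : forall x : R, x ^ 3 - IZR p * x - IZR q = 0 -> x = theta)
  (d : Z) (Hd : (0 < d)%Z)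
  (HOK : forall alpha : R, in_OK theta alpha -> in_Ztheta_over_d d theta alpha)
  (lambda : R) (Hlam : in_OK theta lambda) (Hlaminv : in_OK theta (/ lambda))
  (Hlam1 : 1 < lambda)
  (n : nat) (Hn : (1 <= n)%nat)
  (a b c : Q)
  (Habc : Q2R a + Q2R b * theta + Q2R c * theta ^ 2 = lambda ^ n) :
  let Y := Q2R a + IZR p * Q2R c - Q2R c * theta ^ 2 in
  let Zn := Q2R b * theta - Q2R c * theta ^ 2 in
  let k := IZR d * Q2R c in
  (Rpower lambda (INR n / 2) > 2 * sqrt 2 * IZR d * C1const p theta / Rabs theta ->
     centered (k * theta) = - (IZR d * Zn) / theta) /\
  (Rpower lambda (INR n / 2) > 2 * IZR d * C1const p theta ->
     centered (k * theta ^ 2) = - (IZR d * Y)).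
Proof.
move=> Y Zn k.
have t0 := theta_ne0 Hirr Hroot.
have Dp := disc_pos Hirr Hroot Hunique.
set s := sqrt (3 * theta^2 - 4 * IZR p).
have ss : s * s = 3 * theta^2 - 4 * IZR p by apply: sqrt_sqrt; slra.
have s0 : 0 < s by apply: sqrt_lt_R0.
have hp : IZR p = (3 * theta^2 - s^2) / 4.
  have -> : s^2 = s * s by sring.
  rewrite ss; sfield.
have hq : IZR q = theta^3 - IZR p * theta by slra.
have qp := isQ_IZR p.
have qq := isQ_IZR q.
have lam0 : 0 < lambda by slra.
have INT : forall x lx, qtrip lx -> ev theta lx = x -> is_alg_integer x ->
    forall m, exists kk, IZR d ^ 3 * (x * tQ theta s lx) ^ m = IZR kk.
  move=> x lx qlx ex ax m.
  pose u := tpow (IZR p) (IZR q) lx m.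
  have qu : qtrip u by apply: qtrip_pow.
  have eu : ev theta u = x ^ m by rewrite /u (ev_pow _ _ hq) ex.
  have [u' [v' [w' E]]] : in_Ztheta_over_d d theta (x ^ m).
    apply: HOK; split; last exact: alg_int_pow.
    by rewrite -eu; apply: qtrip_inK.
  have qd : qtrip (tsc (IZR d) u).
    move: qu; rewrite /u; case: (tpow _ _ _ _) => [[a1 b1] c1] [h1 [h2 h3]].
    by repeat split; apply: isQ_mul => //; apply: isQ_IZR.
  have qz : qtrip (IZR u', IZR v', IZR w') by repeat split; apply: isQ_IZR.
  have eq : tsc (IZR d) u = (IZR u', IZR v', IZR w').
    apply: (ev_uniq Hirr Hroot qd qz); rewrite ev_sc eu E /=; sring.
  exists (detZZ p q u' v' w').
  rewrite IZR_detZZ -eq -(tnorm _ hp hq) tQ_sc ev_sc eu /u (tQ_pow _ _ hp hq).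
  rewrite Rpow_mult_distr; sring.
case: Hlam => [[a0 [b0 [c0 E0]]] Hal].
case: Hlaminv => [[a1 [b1 [c1 E1]]] Hali].
pose lt : trip := (Q2R a0, Q2R b0, Q2R c0).
pose li : trip := (Q2R a1, Q2R b1, Q2R c1).
have qlt : qtrip lt by repeat split; apply: isQ_Q.
have qli : qtrip li by repeat split; apply: isQ_Q.
have elt : ev theta lt = lambda by rewrite E0.
have eli : ev theta li = / lambda by rewrite E1.
have one : tmul (IZR p) (IZR q) lt li = (1, 0, 0).
  apply: (ev_uniq Hirr Hroot); first exact: qtrip_mul.
    by split; [exists (inject_Z 1)|split; exists (inject_Z 0)]; rewrite /Q2R /=; sfield.
  rewrite (ev_mul _ _ hq) elt eli /=; sfield; slra.
have QQ : tQ theta s lt * tQ theta s li = 1.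
  by rewrite -(tQ_mul _ _ hp hq) one /tQ /=; sfield.
pose N := lambda * tQ theta s lt.
pose N' := / lambda * tQ theta s li.
have NN : N * N' = 1 by rewrite /N /N' -[RHS]QQ; sfield; slra.
have N0 : 0 < N.
  have : 0 <= N by apply: Rmult_le_pos; [slra | apply: tQ_ge0].
  move=> h; case: (Rle_lt_or_eq_dec _ _ h) => // h0.
  by move: NN; rewrite -h0 Rmult_0_l => /esym /R1_neq_R0 [].
have N'0 : 0 < N'.
  have : 0 <= N' by apply: Rmult_le_pos; [apply: Rlt_le; apply: Rinv_0_lt_compat | apply: tQ_ge0].
  move=> h; case: (Rle_lt_or_eq_dec _ _ h) => // h0.
  by move: NN; rewrite -h0 Rmult_0_r => /esym /R1_neq_R0 [].
have d0 : 0 < IZR d by apply: IZR_lt.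
have d3 : 0 < IZR d ^ 3 by apply: pow_lt.
have N1 : N <= 1 := pow_bound N0 d3 NN (INT _ _ qli eli Hali).
have N'1 : N' <= 1.
  apply: (pow_bound N'0 d3 _ (INT _ _ qlt elt Hal)); rewrite Rmult_comm; exact: NN.
have Neq : N = 1 by snra.
have Qlt : tQ theta s lt = / lambda.
  have h : lambda * tQ theta s lt = 1 by exact: Neq.
  apply: (Rmult_eq_reg_l lambda); last by slra.
  rewrite h Rinv_r //; slra.
pose w : trip := (Q2R a, Q2R b, Q2R c).
have qw : qtrip w by repeat split; apply: isQ_Q.
have wpow : w = tpow (IZR p) (IZR q) lt n.
  apply: (ev_uniq Hirr Hroot qw); first by apply: qtrip_pow.
  by rewrite (ev_pow _ _ hq) elt -Habc.
have Qw : tQ theta s w = / lambda ^ n.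
  by rewrite wpow (tQ_pow _ _ hp hq) Qlt pow_inv.
have [u [v [w' Euvw]]] : in_Ztheta_over_d d theta (lambda ^ n).
  apply: HOK; split; last exact: alg_int_pow.
  by exists a, b, c.
have qd : qtrip (tsc (IZR d) w) by repeat split; apply: isQ_mul; first [apply: isQ_IZR | apply: isQ_Q].
have qz : qtrip (IZR u, IZR v, IZR w') by repeat split; apply: isQ_IZR.
have equ : tsc (IZR d) w = (IZR u, IZR v, IZR w').
  apply: (ev_uniq Hirr Hroot qd qz); rewrite ev_sc (_ : ev theta w = lambda ^ n) //; exact: Euvw.
case: equ => Hu Hv Hw.
pose L := Rpower lambda (INR n / 2).
have L0 : 0 < L by apply: exp_pos.
have LL : L * L = lambda ^ n.
  by rewrite /L -Rpower_plus -Rpower_pow //; congr Rpower; sfield.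
pose A := tA theta s w.
pose B := tB theta s w.
have AB : (A^2 + B^2) * (L * L) = 1.
  have -> : A^2 + B^2 = tQ theta s w by [].
  rewrite Qw LL; sfield; apply: pow_nonzero; slra.
set C1 := C1const p theta.
have r2 : sqrt 2 * sqrt 2 = 2 by apply: sqrt_sqrt; slra.
have r20 : 0 < sqrt 2 by apply: sqrt_lt_R0; slra.
have C1a : sqrt 2 <= C1 by apply: Rmax_l.
have C1b : sqrt 2 * Rabs theta / s <= C1 by apply: Rmax_r.
have T0 : 0 < Rabs theta by apply: Rabs_pos_lt.
have TT : Rabs theta * Rabs theta = theta * theta by rewrite -Rabs_mult Rabs_right //; apply: Rle_ge; snra.
split.
- move=> HL; change (L > 2 * sqrt 2 * IZR d * C1 / Rabs theta) in HL.
  have Ls : L * s > 4 * IZR d.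
    have h1 : 2 * sqrt 2 * IZR d * C1 / Rabs theta >= 4 * IZR d / s.
      have -> : 4 * IZR d / s = 2 * sqrt 2 * IZR d * (sqrt 2 * Rabs theta / s) / Rabs theta.
        have -> : 2 * sqrt 2 * IZR d * (sqrt 2 * Rabs theta / s) / Rabs theta = 2 * (sqrt 2 * sqrt 2) * IZR d / s by sfield; split; slra.
        rewrite r2; sfield; slra.
      apply: Rle_ge; apply: Rmult_le_compat_r; first by apply: Rlt_le; apply: Rinv_0_lt_compat.
      apply: Rmult_le_compat_l => //; apply: Rmult_le_pos; slra.
    have h2 : L > 4 * IZR d / s by slra.
    have -> : 4 * IZR d = 4 * IZR d / s * s by sfield; slra.
    apply: Rmult_gt_compat_r => //.
  have eZ : - (IZR d * Zn) / theta = - (2 * IZR d * B / s).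
    rewrite /Zn /B /w /=; sfield; split; slra.
  have Hk : k * theta = IZR v + - (IZR d * Zn) / theta.
    rewrite /k /Zn -Hv; sfield; slra.
  rewrite Hk; apply: centered_int.
  rewrite eZ.
  have hB : B^2 * (L * L) <= 1.
    have : A^2 * (L*L) >= 0 by apply: Rle_ge; apply: Rmult_le_pos; [apply: pow2_ge_0 | snra].
    slra.
  have key : (2 * IZR d * B / s) ^ 2 < / 4.
    have -> : (2 * IZR d * B / s) ^ 2 = (16 * IZR d ^ 2 * B ^ 2) / (s * s) / 4 by sfield; slra.
    have : 16 * IZR d ^ 2 * B ^ 2 < s * s.
      apply: (Rmult_lt_reg_r (L * L)); first by snra.
      have : 16 * IZR d ^ 2 < s * s * (L * L).
        have h : 4 * IZR d < L * s by slra.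
        have h4 : 0 <= 4 * IZR d by slra.
        have := Rmult_le_0_lt_compat _ _ _ _ h4 h4 h h.
        move=> hh; snra.
      have : 16 * IZR d ^ 2 * B ^ 2 * (L * L) <= 16 * IZR d ^ 2.
        have -> : 16 * IZR d ^ 2 * B ^ 2 * (L * L) = 16 * IZR d ^ 2 * (B ^ 2 * (L * L)) by sring.
        have : 0 <= 16 * IZR d ^ 2 by snra.
        snra.
      slra.
    move=> hh.
    have ss0 : 0 < s * s by snra.
    apply: (Rmult_lt_reg_r 4); first by slra.
    have -> : 16 * IZR d ^ 2 * B ^ 2 / (s * s) / 4 * 4 = 16 * IZR d ^ 2 * B ^ 2 / (s * s) by sfield; slra.
    have -> : / 4 * 4 = 1 by sfield.
    apply: (Rmult_lt_reg_r (s * s)) => //.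
    have -> : 16 * IZR d ^ 2 * B ^ 2 / (s * s) * (s * s) = 16 * IZR d ^ 2 * B ^ 2 by sfield; slra.
    slra.
  snra.
- move=> HL; change (L > 2 * IZR d * C1) in HL.
  have eY : Y = A + theta / s * B.
    rewrite /Y /A /B /w /= hp; sfield; slra.
  have Hk : k * theta ^ 2 = IZR (u + p * w') + - (IZR d * Y).
    rewrite plus_IZR mult_IZR /k /Y -Hu -Hw; sring.
  rewrite Hk; apply: centered_int.
  have CS : Y ^ 2 <= (1 + (theta / s) ^ 2) * (A ^ 2 + B ^ 2).
    rewrite eY; have := pow2_ge_0 (theta / s * A - B); snra.
  have C2 : 1 + (theta / s) ^ 2 <= C1 ^ 2.
    have h1 : 2 <= C1 ^ 2 by rewrite -r2; snra.
    have h0 : 0 <= sqrt 2 * Rabs theta / s.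
      apply: Rmult_le_pos; [apply: Rmult_le_pos; slra | apply: Rlt_le; apply: Rinv_0_lt_compat => //].
    have h2 : (sqrt 2 * Rabs theta / s) ^ 2 <= C1 ^ 2 by snra.
    have E : (sqrt 2 * Rabs theta / s) ^ 2 = 2 * (theta / s) ^ 2.
      have -> : (sqrt 2 * Rabs theta / s) ^ 2 = (sqrt 2 * sqrt 2) * (Rabs theta * Rabs theta) / (s * s) by sfield; slra.
      rewrite r2 TT; sfield; slra.
    rewrite E in h2.
    have : 0 <= (theta / s) ^ 2 by apply: pow2_ge_0.
    slra.
  have key : (IZR d * Y) ^ 2 < / 4.
    have hC : 0 <= C1 by slra.
    have hL : 2 * IZR d * C1 < L by slra.
    have h4 : 0 <= 2 * IZR d * C1 by snra.
    have LL4 : (2 * IZR d * C1) * (2 * IZR d * C1) < L * L by apply: Rmult_le_0_lt_compat.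
    have Y2 : Y ^ 2 * (L * L) <= C1 ^ 2.
      have : (1 + (theta / s) ^ 2) * (A ^ 2 + B ^ 2) * (L * L) <= C1 ^ 2.
        have -> : (1 + (theta / s) ^ 2) * (A ^ 2 + B ^ 2) * (L * L) = (1 + (theta / s) ^ 2) * ((A ^ 2 + B ^ 2) * (L * L)) by sring.
        by rewrite AB Rmult_1_r.
      have : Y ^ 2 * (L * L) <= (1 + (theta / s) ^ 2) * (A ^ 2 + B ^ 2) * (L * L).
        by apply: Rmult_le_compat_r => //; snra.
      slra.
    apply: (Rmult_lt_reg_r (L * L)); first by snra.
    have -> : (IZR d * Y) ^ 2 * (L * L) = IZR d ^ 2 * (Y ^ 2 * (L * L)) by sring.
    have : IZR d ^ 2 * (Y ^ 2 * (L * L)) <= IZR d ^ 2 * C1 ^ 2.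
      by apply: Rmult_le_compat_l => //; snra.
    snra.
  snra.
Qed.
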